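(* Let $f(x,y)=\sum_{i,j=-\infty}^{\infty}\lambda(i,j)x^iy^j$ be a nonzero bilateral formal series with complex coefficients. Then $f$ is self-orthogonal (i.e. $f\perp f$) if and only if there exist integers $m_0,k_0$ and complex sequences $\{p_i\}_{i\in\mathbb{Z}}$, $\{q_i\}_{i\in\mathbb{Z}}$ with $p_{m_0}=0$, $q_{k_0}=0$ and $p_{k_0}=-q_{m_0}\neq 0$, such that $$f(x,y)=P(x)Q(y)-P(y)Q(x),$$ where $P(x)=\sum_{i=-\infty}^{\infty}p_ix^i$ and $Q(x)=\frac{1}{q_{m_0}}\sum_{i=-\infty}^{\infty}q_ix^i$.
   Context: A bilateral formal series in $x,y$ is a formal expression $\sum_{i,j\in\mathbb{Z}}\lambda(i,j)x^iy^j$ with complex coefficients (no convergence required). For two such series $f,g$, the expression $g(u,v)f(z,w)-g(u,w)f(z,v)+g(v,w)f(z,u)$ is a well-defined formal series in four independent variables $u,v,w,z$ (each product involves series in disjoint sets of variables). One writes $f\perp g$ (''$f$ is orthogonal to $g$'') if this expression is identically zero, and calls $f$ self-orthogonal if $f\perp f$. *)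

(* Defs.v *)
From HB Require Import structures.
From mathcomp Require Import all_boot all_order all_algebra.
From mathcomp Require Import complex.
From mathcomp Require Import Rstruct.
Set Implicit Arguments. Unset Strict Implicit. Unset Printing Implicit Defensive.
Import Order.TTheory GRing.Theory Num.Theory.
Local Open Scope ring_scope.

Definition Cplx : fieldType := (complex Rdefinitions.R : fieldType).

(* A bilateral formal series sum_{i,j in Z} lambda(i,j) x^i y^j,
   represented by its coefficient function lambda. *)
Definition bseries := int -> int -> Cplx.

(* f ⊥ g : the 4-variable formal series
     g(u,v)f(z,w) - g(u,w)f(z,v) + g(v,w)f(z,u)
   vanishes identically.  Its coefficient of u^a v^b w^c z^d is
     g(a,b) f(d,c) - g(a,c) f(d,b) + g(b,c) f(d,a). *)
Definition orth (f g : bseries) : Prop :=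
  forall a b c d : int, g a b * f d c - g a c * f d b + g b c * f d a = 0.

Definition self_orth (f : bseries) : Prop := orth f f.

Definition bseries_nonzero (f : bseries) : Prop := exists i j, f i j != 0.

(* Main.v *)
Require Import Defs.
From HB Require Import structures.
From mathcomp Require Import all_boot all_order all_algebra.
From mathcomp Require Import complex.
From mathcomp Require Import ring.
Import GRing.Theory.
Local Open Scope ring_scope.

Lemma so_diag (f : bseries) : bseries_nonzero f -> self_orth f -> forall b, f b b = 0.
Proof.
move=> [d [a nz]] H b.
have := H a b b d.
have -> : f a b * f d b - f a b * f d b + f b b * f d a = f b b * f d a by ring.
by move/eqP; rewrite mulf_eq0 (negbTE nz) orbF => /eqP.
Qed.

Lemma so_anti (f : bseries) : bseries_nonzero f -> self_orth f -> forall a b, f b a = - f a b.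
Proof.
move=> nz H a b.
have dg := @so_diag f nz H.
have h1 := H a b a b.
have h2 := H b a b a.
have e : (f a b + f b a) * (f a b + f b a) = 0.
  move: h1 h2; set x := f a b; set y := f b a => h1 h2.
  rewrite !dg !mul0r !subr0 in h1 h2.
  have -> : (x + y) * (x + y) = (x * y + y * y) + (y * x + x * x) by ring.
  by rewrite h1 h2 addr0.
move/eqP: e; rewrite mulf_eq0 orbb => /eqP e.
by apply/eqP; rewrite -subr_eq0 opprK addrC e.
Qed.

Theorem theorem2p1 (f : bseries) :
  bseries_nonzero f ->
  (self_orth f <->
   exists (m0 k0 : int) (p q : int -> Cplx),
     [/\ p m0 = 0, q k0 = 0, p k0 = - q m0, p k0 != 0 &
       forall i j : int, f i j = p i * (q j / q m0) - p j * (q i / q m0)]).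
Proof.
move=> nz; split.
- move=> H.
  have dg := @so_diag f nz H.
  have an := @so_anti f nz H.
  case: nz => k [m c0].
  exists m, k, (fun i => f i m), (fun i => f i k).
  split; [exact: dg | exact: dg | by rewrite /= (an k m) opprK | exact: c0 | ].
    move=> i j.
    have h := H i j m k.
    rewrite /= (an k m).
    have nc : - f k m != 0 by rewrite oppr_eq0.
    apply: (mulIf nc).
    rewrite mulrBl -!mulrA !mulVf // !mulr1.
    rewrite (an j k) (an i k) in h.
    apply/eqP; rewrite -subr_eq0 -oppr_eq0; apply/eqP; rewrite -h; ring.
- move=> [m0 [k0 [p [q [_ _ _ _ E]]]]] a b c d.
  rewrite !E; move: (q m0)^-1 => r.
  move: (p a) (p b) (p c) (p d) (q a) (q b) (q c) (q d) => pa pb pc pd qa qb qc qd.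
  ring.
Qed.
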